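(* Let $\mathbf{P}$ be a finite poset with a metric $d_{\mathbf{P}}$. Then $d_{\mathrm{GT}}:\mathrm{Ob}(\mathrm{vect}^{\mathbf{P}})\times\mathrm{Ob}(\mathrm{vect}^{\mathbf{P}})\to[0,+\infty]$ is an extended pseudometric, i.e. for all $\mathbf{P}$-modules $M,N,O$: $d_{\mathrm{GT}}(M,M)=0$, $d_{\mathrm{GT}}(M,N)=d_{\mathrm{GT}}(N,M)$, and $d_{\mathrm{GT}}(M,O)\le d_{\mathrm{GT}}(M,N)+d_{\mathrm{GT}}(N,O)$.
   Context: Fix a field $k$; $\mathrm{vect}$ is the category of finite-dimensional $k$-vector spaces. A finite poset is a category with a unique morphism $x\to y$ iff $x\le y$; a $\mathbf{P}$-module is a functor $\mathbf{P}\to\mathrm{vect}$, and $\mathrm{vect}^{\mathbf{P}}$ is their category. For a monotone map $g$, $g^*$ denotes precomposition with $g$. A Galois insertion $f:\mathbf{Q}\rightleftarrows\mathbf{P}:g$ consists of monotone maps $f:\mathbf{Q}\to\mathbf{P}$, $g:\mathbf{P}\to\mathbf{Q}$ with $f(u)\le x\iff u\le g(x)$ for all $u,x$, and $f\circ g=\mathrm{id}_{\mathbf{P}}$. A Galois coupling of $(M,N)$ is a tuple $(\mathbf{Q},f\dashv g,h\dashv i,\Gamma)$ with $\mathbf{Q}$ a finite poset, $f:\mathbf{Q}\rightleftarrows\mathbf{P}:g$ and $h:\mathbf{Q}\rightleftarrows\mathbf{P}:i$ Galois insertions, and $\Gamma\in\mathrm{vect}^{\mathbf{Q}}$ with $g^*\Gamma\cong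 M$ and $i^*\Gamma\cong N$. Its cost is $\mathrm{cost}(\Gamma)=\sup_{q\in\mathbf{Q}}d_{\mathbf{P}}(f(q),h(q))$. The Galois transport distance $d_{\mathrm{GT}}(M,N)$ is the infimum of the costs of all Galois couplings of $(M,N)$, and $\infty$ if there is none. *)

(* Defs.v *)
From HB Require Import structures.
From mathcomp Require Import all_boot all_order all_algebra.
From mathcomp Require Import boolp classical_sets reals constructive_ereal ereal.
Set Implicit Arguments. Unset Strict Implicit. Unset Printing Implicit Defensive.
Import Order.TTheory GRing.Theory Num.Theory.
Local Open Scope ring_scope.

(* A P-module (functor P -> vect), with vect modelled skeletally:
   the object at x is k^(pm_dim x) (row vectors), and for x <= y the
   structure map is a matrix acting on the right of row vectors. *)
Record pmod (k : fieldType) (d : Order.disp_t) (P : finPOrderType d) := PMod {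
  pm_dim : P -> nat;
  pm_map : forall x y : P, (x <= y)%O -> 'M[k]_(pm_dim x, pm_dim y);
  pm_map_id : forall (x : P) (h : (x <= x)%O), pm_map h = (1%:M)%R;
  pm_map_comp : forall (x y z : P) (hxy : (x <= y)%O) (hyz : (y <= z)%O)
      (hxz : (x <= z)%O), pm_map hxz = pm_map hxy *m pm_map hyz }.

Definition pmod_iso (k : fieldType) (d : Order.disp_t) (P : finPOrderType d)
    (M N : pmod k P) : Prop :=
  exists (phi : forall x : P, 'M[k]_(pm_dim M x, pm_dim N x))
         (psi : forall x : P, 'M[k]_(pm_dim N x, pm_dim M x)),
    [/\ forall x, phi x *m psi x = (1%:M)%R,
        forall x, psi x *m phi x = (1%:M)%R &
        forall (x y : P) (h : (x <= y)%O), pm_map M h *m phi y = phi x *m pm_map N h].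

Definition pullback (k : fieldType) (dq : Order.disp_t) (Q : finPOrderType dq)
    (d : Order.disp_t) (P : finPOrderType d) (g : P -> Q)
    (gm : {homo g : x y / (x <= y)%O}) (G : pmod k Q) : pmod k P :=
  @PMod k d P (fun x => pm_dim G (g x))
    (fun x y h => pm_map G (gm x y h))
    (fun x h => pm_map_id G (gm x x h))
    (fun x y z h1 h2 h3 => pm_map_comp G (gm x y h1) (gm y z h2) (gm x z h3)).

Record galois_ins (dq : Order.disp_t) (Q : finPOrderType dq)
    (d : Order.disp_t) (P : finPOrderType d) := GIns {
  gi_f : Q -> P;
  gi_g : P -> Q;
  gi_f_mono : {homo gi_f : u v / (u <= v)%O};
  gi_g_mono : {homo gi_g : x y / (x <= y)%O};
  gi_adj : forall (u : Q) (x : P), (gi_f u <= x)%O = (u <= gi_g x)%O;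
  gi_retr : forall x : P, gi_f (gi_g x) = x }.

Definition is_metric (R : realType) (T : Type) (dist : T -> T -> R) : Prop :=
  [/\ forall x y, dist x y = 0 <-> x = y,
      forall x y, dist x y = dist y x &
      forall x y z, (dist x z <= dist x y + dist y z)%R].

(* Cost of a coupling: sup over q of d_P(f q, h q) (0 for empty Q). *)
Definition coupling_cost (R : realType) (dq : Order.disp_t) (Q : finPOrderType dq)
    (d : Order.disp_t) (P : finPOrderType d) (dP : P -> P -> R)
    (fg hi : galois_ins Q P) : R :=
  \big[Num.max/0%R]_(q : Q) dP (gi_f fg q) (gi_f hi q).

Definition galois_coupling (k : fieldType) (dq : Order.disp_t) (Q : finPOrderType dq)
    (d : Order.disp_t) (P : finPOrderType d) (M N : pmod k P)
    (fg hi : galois_ins Q P) (G : pmod k Q) : Prop :=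
  pmod_iso (pullback (gi_g_mono fg) G) M /\ pmod_iso (pullback (gi_g_mono hi) G) N.

(* Galois transport distance: infimum of costs over all Galois couplings
   (over all finite posets Q); +oo if there is none. *)
Definition dGT (k : fieldType) (R : realType) (d : Order.disp_t) (P : finPOrderType d)
    (dP : P -> P -> R) (M N : pmod k P) : \bar R :=
  ereal_inf [set c : \bar R | exists (dq : Order.disp_t) (Q : finPOrderType dq)
      (fg hi : galois_ins Q P) (G : pmod k Q),
      galois_coupling M N fg hi G /\ c = ((coupling_cost dP fg hi)%:E)%E].

(* Main.v *)
Require Import Defs.
From HB Require Import structures.
From mathcomp Require Import all_boot all_order all_algebra.
From mathcomp Require Import boolp classical_sets reals constructive_ereal ereal.
From mathcomp Require Import ring.
Set Implicit Arguments. Unset Strict Implicit. Unset Printing Implicit Defensive.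
Import Order.TTheory GRing.Theory Num.Theory.
Local Open Scope ring_scope.

Definition POwrap (T : finType) (le : rel T) (Hr : reflexive le)
  (Ha : antisymmetric le) (Ht : transitive le) : Type := T.
HB.instance Definition _ T le Hr Ha Ht := Finite.on (@POwrap T le Hr Ha Ht).
HB.instance Definition _ T le Hr Ha Ht :=
  @Order.Le_isPOrder.Build (Order.Disp tt tt) (@POwrap T le Hr Ha Ht) le Hr Ha Ht.

Section GI.
Variables (dq : Order.disp_t) (Q : finPOrderType dq) (d : Order.disp_t) (P : finPOrderType d).
Variable (gi : galois_ins Q P).
Lemma gi_unit u : (u <= gi_g gi (gi_f gi u))%O.
Proof. by rewrite -gi_adj. Qed.
Lemma gi_counit x : (gi_f gi (gi_g gi x) <= x)%O.
Proof. by rewrite gi_retr. Qed.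
Lemma gi_gle x y : (gi_g gi x <= gi_g gi y)%O -> (x <= y)%O.
Proof. by move=> h; rewrite -(gi_retr gi x) -(gi_retr gi y); apply: gi_f_mono. Qed.
End GI.

Section Tmap.
Variables (k : fieldType) (dq : Order.disp_t) (Q : finPOrderType dq) (G : pmod k Q).
Definition tmap (x y : Q) : 'M[k]_(pm_dim G x, pm_dim G y) :=
  match (x <= y)%O as b return ((x <= y)%O = b -> 'M[k]_(pm_dim G x, pm_dim G y)) with
  | true => fun h => pm_map G h | false => fun _ => 0 end (erefl _).
Lemma tmapE x y (h : (x <= y)%O) : tmap x y = pm_map G h.
Proof.
rewrite /tmap; move: (erefl (x <= y)%O).
case: {2 3}(x <= y)%O => e; first by congr pm_map; exact: bool_irrelevance.
by rewrite h in e.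
Qed.
Lemma tmap1 x : tmap x x = 1%:M.
Proof. by rewrite (tmapE (lexx x)) pm_map_id. Qed.
Lemma tmapM x y z : (x <= y)%O -> (y <= z)%O -> tmap x y *m tmap y z = tmap x z.
Proof.
move=> h1 h2; rewrite (tmapE h1) (tmapE h2) (tmapE (le_trans h1 h2)).
by rewrite (pm_map_comp G h1 h2).
Qed.
Lemma tmapMA x y z m (B : 'M[k]_(pm_dim G z, m)) : (x <= y)%O -> (y <= z)%O ->
  tmap x y *m (tmap y z *m B) = tmap x z *m B.
Proof. by move=> h1 h2; rewrite mulmxA tmapM. Qed.
End Tmap.

Lemma pmod_iso_trans (k : fieldType) (d : Order.disp_t) (P : finPOrderType d)
  (M N O : pmod k P) : pmod_iso M N -> pmod_iso N O -> pmod_iso M O.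
Proof.
move=> [phi [psi [h1 h2 h3]]] [phi' [psi' [h1' h2' h3']]].
exists (fun x => phi x *m phi' x), (fun x => psi' x *m psi x); split.
- by move=> x; rewrite mulmxA -(mulmxA (phi x)) h1' mulmx1 h1.
- by move=> x; rewrite mulmxA -(mulmxA (psi' x)) h2 mulmx1 h2'.
- by move=> x y h; rewrite mulmxA h3 -!mulmxA h3'.
Qed.

Section Tri.
Variables (k : fieldType) (d : Order.disp_t) (P : finPOrderType d).
Variables (dq1 : Order.disp_t) (Q1 : finPOrderType dq1) (fg1 hi1 : galois_ins Q1 P)
  (G1 : pmod k Q1).
Variables (dq2 : Order.disp_t) (Q2 : finPOrderType dq2) (fg2 hi2 : galois_ins Q2 P)
  (G2 : pmod k Q2).
Variable N : pmod k P.
Local Notation f1 := (gi_f fg1). Local Notation g1 := (gi_g fg1).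
Local Notation h1 := (gi_f hi1). Local Notation i1 := (gi_g hi1).
Local Notation f2 := (gi_f fg2). Local Notation g2 := (gi_g fg2).
Local Notation h2 := (gi_f hi2). Local Notation i2 := (gi_g hi2).
Variables (phi1 : forall x, 'M[k]_(pm_dim G1 (i1 x), pm_dim N x))
          (psi1 : forall x, 'M[k]_(pm_dim N x, pm_dim G1 (i1 x)))
          (phi2 : forall x, 'M[k]_(pm_dim G2 (g2 x), pm_dim N x))
          (psi2 : forall x, 'M[k]_(pm_dim N x, pm_dim G2 (g2 x))).
Hypotheses (e1 : forall x, phi1 x *m psi1 x = 1%:M) (e1' : forall x, psi1 x *m phi1 x = 1%:M)
  (n1 : forall x y (h : (x <= y)%O), pm_map G1 (gi_g_mono hi1 h) *m phi1 y = phi1 x *m pm_map N h)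
  (e2 : forall x, phi2 x *m psi2 x = 1%:M) (e2' : forall x, psi2 x *m phi2 x = 1%:M)
  (n2 : forall x y (h : (x <= y)%O), pm_map G2 (gi_g_mono fg2 h) *m phi2 y = phi2 x *m pm_map N h).

Local Notation t1 := (tmap G1). Local Notation t2 := (tmap G2).

Definition alpha x := locked (phi1 x *m psi2 x).
Definition beta x := locked (phi2 x *m psi1 x).
Lemma alpha_beta x : alpha x *m beta x = 1%:M.
Proof. by rewrite /alpha /beta -!lock mulmxA -(mulmxA (phi1 x)) e2' mulmx1 e1. Qed.
Lemma beta_alpha x : beta x *m alpha x = 1%:M.
Proof. by rewrite /alpha /beta -!lock mulmxA -(mulmxA (phi2 x)) e1' mulmx1 e2. Qed.
Lemma n2' x y (h : (x <= y)%O) : psi2 x *m t2 (g2 x) (g2 y) = pm_map N h *m psi2 y.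
Proof.
rewrite (tmapE _ (gi_g_mono fg2 h)).
rewrite -[LHS]mulmx1 -(e2 y) mulmxA -(mulmxA (psi2 x)) n2.
by rewrite mulmxA e2' mul1mx.
Qed.
Lemma n1' x y (h : (x <= y)%O) : psi1 x *m t1 (i1 x) (i1 y) = pm_map N h *m psi1 y.
Proof.
rewrite (tmapE _ (gi_g_mono hi1 h)).
rewrite -[LHS]mulmx1 -(e1 y) mulmxA -(mulmxA (psi1 x)) n1.
by rewrite mulmxA e1' mul1mx.
Qed.
Lemma alpha_nat x y : (x <= y)%O ->
  t1 (i1 x) (i1 y) *m alpha y = alpha x *m t2 (g2 x) (g2 y).
Proof.
move=> h; rewrite /alpha -!lock mulmxA (tmapE _ (gi_g_mono hi1 h)) n1 -mulmxA -(n2' h).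
by rewrite mulmxA.
Qed.
Lemma beta_nat x y : (x <= y)%O ->
  t2 (g2 x) (g2 y) *m beta y = beta x *m t1 (i1 x) (i1 y).
Proof.
move=> h; rewrite /beta -!lock mulmxA (tmapE _ (gi_g_mono fg2 h)) n2 -mulmxA -(n1' h).
by rewrite mulmxA.
Qed.

Definition inQ (p : Q1 * Q2) := (p.2 == g2 (h1 p.1)) || (p.1 == i1 (f2 p.2)).
Definition QS := {p : Q1 * Q2 | inQ p}.
Definition leQ (p q : QS) := ((val p).1 <= (val q).1)%O && ((val p).2 <= (val q).2)%O.
Lemma leQ_refl : reflexive leQ.
Proof. by move=> p; rewrite /leQ !lexx. Qed.
Lemma leQ_anti : antisymmetric leQ.
Proof.
move=> [[a b] pab] [[c e] pce] /andP[/andP[/= h1 h2] /andP[h3 h4]].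
apply: val_inj => /=; congr pair; apply: le_anti; rewrite ?h1 ?h2 ?h3 ?h4 //.
Qed.
Lemma leQ_trans : transitive leQ.
Proof.
move=> q p r /andP[h1 h2] /andP[h3 h4]; apply/andP; split; [exact: le_trans h1 h3|exact: le_trans h2 h4].
Qed.
Definition Q := POwrap leQ_refl leQ_anti leQ_trans.

Definition A (p : Q1 * Q2) := p.2 == g2 (h1 p.1).
Definition dimQ (p : Q1 * Q2) := if A p then pm_dim G1 p.1 else pm_dim G2 p.2.
Definition mapQ (p q : Q1 * Q2) : 'M[k]_(dimQ p, dimQ q) :=
 match A p as b return 'M[k]_(if b then pm_dim G1 p.1 else pm_dim G2 p.2, dimQ q) with
 | true => match A q as c return 'M[k]_(pm_dim G1 p.1, if c then pm_dim G1 q.1 else pm_dim G2 q.2) with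
     | true => t1 p.1 q.1
     | false => t1 p.1 (i1 (h1 p.1)) *m alpha (h1 p.1) *m t2 (g2 (h1 p.1)) q.2 end
 | false => match A q as c return 'M[k]_(pm_dim G2 p.2, if c then pm_dim G1 q.1 else pm_dim G2 q.2) with
     | true => t2 p.2 (g2 (f2 p.2)) *m beta (f2 p.2) *m t1 (i1 (f2 p.2)) q.1
     | false => t2 p.2 q.2 end end.

Lemma memA (p : Q1 * Q2) : A p -> p.2 = g2 (h1 p.1).
Proof. by move/eqP. Qed.
Lemma memB (p : Q1 * Q2) : inQ p -> ~~ A p -> p.1 = i1 (f2 p.2).
Proof. by rewrite /inQ /A => /orP[->//|/eqP]. Qed.
Lemma le21 (p : Q1 * Q2) : inQ p -> (p.2 <= g2 (h1 p.1))%O.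
Proof.
case/orP=> /eqP->; first by []. by rewrite gi_retr gi_unit.
Qed.
Lemma le12 (p : Q1 * Q2) : inQ p -> (p.1 <= i1 (f2 p.2))%O.
Proof.
case/orP=> /eqP->; last by []. by rewrite gi_retr gi_unit.
Qed.

Lemma mapQ1 p : mapQ p p = 1%:M.
Proof. by rewrite /mapQ /dimQ; case: (A p); rewrite tmap1. Qed.

Lemma mapQM (p q r : QS) : leQ p q -> leQ q r ->
  mapQ (val p) (val q) *m mapQ (val q) (val r) = mapQ (val p) (val r).
Proof.
case: p q r => [[p1 p2] pP] [[q1 q2] qP] [[r1 r2] rP] /andP[/= l1 l2] /andP[/= l3 l4].
have up1 u : (u <= i1 (h1 u))%O by exact: gi_unit.
have up2 u : (u <= g2 (f2 u))%O by exact: gi_unit.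
have mi1 x y : (x <= y)%O -> (i1 x <= i1 y)%O by exact: gi_g_mono.
have mg2 x y : (x <= y)%O -> (g2 x <= g2 y)%O by exact: gi_g_mono.
have mh1 x y : (x <= y)%O -> (h1 x <= h1 y)%O by exact: gi_f_mono.
have mf2 x y : (x <= y)%O -> (f2 x <= f2 y)%O by exact: gi_f_mono.
have fg2K x : f2 (g2 x) = x by exact: gi_retr.
have hi1K x : h1 (i1 x) = x by exact: gi_retr.
rewrite /mapQ /dimQ /=.
case Ap: (A (p1, p2)); case Aq: (A (q1, q2)); case Ar: (A (r1, r2)).
- exact: tmapM.
- have Eq2 := memA Aq; simpl in Eq2.
  rewrite -!mulmxA tmapMA //.
  have E : t1 p1 (i1 (h1 q1)) = t1 p1 (i1 (h1 p1)) *m t1 (i1 (h1 p1)) (i1 (h1 q1)).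
    by rewrite tmapM // mi1 // mh1.
  rewrite E -mulmxA (mulmxA (t1 (i1 (h1 p1)) _)) alpha_nat; last exact: mh1.
  rewrite -!mulmxA tmapM //; first exact/mg2/mh1. by rewrite -Eq2.
- have Eq2 := memA Ap; have Eq1 := memB qP (negbT Aq); simpl in Eq2, Eq1.
  have ab : (h1 p1 <= f2 q2)%O by rewrite -[h1 p1]fg2K -Eq2 mf2.
  rewrite -!mulmxA (mulmxA (t2 _ _) (t2 _ _)) tmapM; last by [].
    rewrite (mulmxA (alpha _)) -alpha_nat // -!mulmxA (mulmxA (alpha _)) alpha_beta mul1mx.
    by rewrite tmapMA ?mi1 // tmapM // -Eq1.
  by rewrite -Eq2.
- have Eq2 := memA Ap; simpl in Eq2.
  by rewrite -!mulmxA tmapM // -Eq2.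
- have Eq1 := memB pP (negbT Ap); simpl in Eq1.
  by rewrite -!mulmxA tmapM // -Eq1.
- have Eq1 := memB pP (negbT Ap); have Eq2 := memA Aq; simpl in Eq2, Eq1.
  have ba : (f2 p2 <= h1 q1)%O by rewrite -[f2 p2]hi1K -Eq1 mh1.
  rewrite -!mulmxA (mulmxA (t1 _ _) (t1 _ _)) tmapM; last exact: up1.
    rewrite (mulmxA (t1 _ _)) alpha_nat // -!mulmxA (mulmxA (beta _)) beta_alpha mul1mx.
    by rewrite tmapMA ?mg2 // tmapM // -Eq2.
  by rewrite -Eq1.
- have Eq1 := memB qP (negbT Aq); simpl in Eq1.
  rewrite -!mulmxA tmapMA //.
  have E : t2 p2 (g2 (f2 q2)) = t2 p2 (g2 (f2 p2)) *m t2 (g2 (f2 p2)) (g2 (f2 q2)).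
    by rewrite tmapM // mg2 // mf2.
  rewrite E -mulmxA (mulmxA (t2 (g2 (f2 p2)) _)) beta_nat; last exact: mf2.
  rewrite -!mulmxA tmapM //; first exact/mi1/mf2. by rewrite -Eq1.
- exact: tmapM.
Qed.

Definition GQ : pmod k Q := @PMod k _ Q (fun p : Q => dimQ (val p))
  (fun p q _ => mapQ (val p) (val q)) (fun p _ => mapQ1 (val p))
  (fun p q r h1 h2 _ => esym (mapQM h1 h2)).

Lemma gQ_proof x : inQ (g1 x, g2 (h1 (g1 x))).
Proof. by rewrite /inQ /= eqxx. Qed.
Definition gQ (x : P) : Q := @exist _ inQ _ (gQ_proof x).
Definition fQ (p : Q) : P := f1 (val p).1.
Lemma iQ_proof x : inQ (i1 (f2 (i2 x)), i2 x).
Proof. by rewrite /inQ /= eqxx orbT. Qed.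
Definition iQ (x : P) : Q := @exist _ inQ _ (iQ_proof x).
Definition hQ (p : Q) : P := h2 (val p).2.

Lemma fQ_mono : {homo fQ : u v / (u <= v)%O}.
Proof. by move=> u v /andP[h _]; apply: gi_f_mono. Qed.
Lemma gQ_mono : {homo gQ : u v / (u <= v)%O}.
Proof.
move=> u v h; apply/andP; split; first exact: gi_g_mono.
by apply/gi_g_mono/gi_f_mono/gi_g_mono.
Qed.
Lemma fQ_adj u x : (fQ u <= x)%O = (u <= gQ x)%O.
Proof.
case: u => [[u1 u2] uP]; rewrite /fQ /= gi_adj; apply/idP/andP => [h|[]//].
split=> //=; apply: le_trans (le21 uP) _.
by apply/gi_g_mono/gi_f_mono.
Qed.
Lemma fQ_retr x : fQ (gQ x) = x.
Proof. exact: gi_retr. Qed.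
Definition fgQ := GIns fQ_mono gQ_mono fQ_adj fQ_retr.

Lemma hQ_mono : {homo hQ : u v / (u <= v)%O}.
Proof. by move=> u v /andP[_ h]; apply: gi_f_mono. Qed.
Lemma iQ_mono : {homo iQ : u v / (u <= v)%O}.
Proof.
move=> u v h; apply/andP; split; last exact: gi_g_mono.
by apply/gi_g_mono/gi_f_mono/gi_g_mono.
Qed.
Lemma hQ_adj u x : (hQ u <= x)%O = (u <= iQ x)%O.
Proof.
case: u => [[u1 u2] uP]; rewrite /hQ /= gi_adj; apply/idP/andP => [h|[]//].
split=> //=; apply: le_trans (le12 uP) _.
by apply/gi_g_mono/gi_f_mono.
Qed.
Lemma hQ_retr x : hQ (iQ x) = x.
Proof. exact: gi_retr. Qed.
Definition hiQ := GIns hQ_mono iQ_mono hQ_adj hQ_retr.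

Lemma isoM : pmod_iso (pullback (gi_g_mono fgQ) GQ) (pullback (gi_g_mono fg1) G1).
Proof.
pose phi x := match A (val (gQ x)) as b return
   'M[k]_(if b then pm_dim G1 (val (gQ x)).1 else pm_dim G2 (val (gQ x)).2, pm_dim G1 (g1 x))
   with true => 1%:M | false => 0 end.
pose psi x := match A (val (gQ x)) as b return
   'M[k]_(pm_dim G1 (g1 x), if b then pm_dim G1 (val (gQ x)).1 else pm_dim G2 (val (gQ x)).2)
   with true => 1%:M | false => 0 end.
have HA x : A (val (gQ x)) by rewrite /A eqxx.
exists phi, psi; split.
- move=> x; rewrite /phi /psi /= /dimQ.
  by case E: (A (val (gQ x))); [rewrite mulmx1|rewrite HA in E].
- move=> x; rewrite /phi /psi /= /dimQ.
  by case E: (A (val (gQ x))); [rewrite mulmx1|rewrite HA in E].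
- move=> x y h; rewrite /phi /= /mapQ /dimQ.
  case E: (A (val (gQ x))); last by rewrite HA in E.
  case E': (A (val (gQ y))); last by rewrite HA in E'.
  by rewrite mulmx1 mul1mx (tmapE _ (gi_g_mono fg1 h)).
Qed.

Lemma isoO : pmod_iso (pullback (gi_g_mono hiQ) GQ) (pullback (gi_g_mono hi2) G2).
Proof.
pose phi x := match A (val (iQ x)) as b return
   'M[k]_(if b then pm_dim G1 (val (iQ x)).1 else pm_dim G2 (val (iQ x)).2, pm_dim G2 (i2 x))
   with true => alpha (f2 (i2 x)) *m t2 (g2 (f2 (i2 x))) (i2 x) | false => 1%:M end.
pose psi x := match A (val (iQ x)) as b return
   'M[k]_(pm_dim G2 (i2 x), if b then pm_dim G1 (val (iQ x)).1 else pm_dim G2 (val (iQ x)).2)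
   with true => t2 (i2 x) (g2 (f2 (i2 x))) *m beta (f2 (i2 x)) | false => 1%:M end.
have up2 u : (u <= g2 (f2 u))%O by exact: gi_unit.
have hi1K x : h1 (i1 x) = x by exact: gi_retr.
have HA x : A (val (iQ x)) -> i2 x = g2 (f2 (i2 x)).
  by move/memA => /=; rewrite hi1K.
exists phi, psi; split.
- move=> x; rewrite /phi /psi /= /dimQ.
  case E: (A (val (iQ x))); last by rewrite mulmx1.
  have e := HA x E.
  rewrite -mulmxA (mulmxA (t2 _ _)) tmapM // ?tmap1 ?mul1mx ?alpha_beta //.
  by rewrite -e.
- move=> x; rewrite /phi /psi /= /dimQ.
  case E: (A (val (iQ x))); last by rewrite mulmx1.
  have e := HA x E.
  rewrite -mulmxA (mulmxA (beta _)) beta_alpha mul1mx tmapM // ?tmap1 //.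
  by rewrite -e.
- move=> x y h; rewrite /phi /= /mapQ /dimQ (tmapE _ (gi_g_mono hi2 h)) -(tmapE G2).
  have hy : (f2 (i2 x) <= f2 (i2 y))%O by apply/gi_f_mono/gi_g_mono.
  have hq : (i2 x <= i2 y)%O by apply/gi_g_mono.
  case E: (A (val (iQ x))); case E': (A (val (iQ y))) => /=.
  + have e := HA x E; have e' := HA y E'.
    rewrite mulmxA alpha_nat // -!mulmxA tmapM; last by rewrite -e'.
      by rewrite tmapM // -e.
    by apply/gi_g_mono.
  + have e := HA x E.
    rewrite hi1K tmap1 mul1mx mulmx1 -!mulmxA tmapM //; by rewrite -e.
  + have e' := HA y E'.
    rewrite -!mulmxA (mulmxA (t1 _ _)) alpha_nat // -!mulmxA (mulmxA (beta _)) beta_alpha mul1mx.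
    rewrite tmapMA //; last by apply/gi_g_mono.
    by rewrite tmapM // ?mul1mx // -e'.
  + by rewrite mulmx1 mul1mx.
Qed.

Lemma cost_ge0 (R : realType) (dq : Order.disp_t) (Q' : finPOrderType dq)
  (dP : P -> P -> R) (fg hi : galois_ins Q' P) : 0 <= coupling_cost dP fg hi.
Proof.
rewrite /coupling_cost; elim/big_rec: _ => // i x _ hx.
by rewrite le_max hx orbT.
Qed.

Lemma costQ (R : realType) (dP : P -> P -> R)
  (htri : forall x y z, dP x z <= dP x y + dP y z) :
  coupling_cost dP fgQ hiQ <= coupling_cost dP fg1 hi1 + coupling_cost dP fg2 hi2.
Proof.
rewrite {1}/coupling_cost; apply: bigmax_le; first by rewrite addr_ge0 ?cost_ge0.
move=> [[q1 q2] qP] _ /=; rewrite /fQ /hQ /=.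
have E : h1 q1 = f2 q2.
  by case/orP: qP => /eqP /= ->; rewrite gi_retr.
apply: le_trans (htri _ (h1 q1) _) _; apply: lerD.
  rewrite /coupling_cost; exact: (le_bigmax _ (fun q => dP (f1 q) (h1 q)) q1).
rewrite E /coupling_cost; exact: (le_bigmax _ (fun q => dP (f2 q) (h2 q)) q2).
Qed.

Lemma tri_exists (R : realType) (dP : P -> P -> R)
  (htri : forall x y z, dP x z <= dP x y + dP y z) (M O : pmod k P) :
  pmod_iso (pullback (gi_g_mono fg1) G1) M -> pmod_iso (pullback (gi_g_mono hi2) G2) O ->
  exists (dq : Order.disp_t) (Q' : finPOrderType dq) (fg hi : galois_ins Q' P) (G : pmod k Q'),
  galois_coupling M O fg hi G /\
  coupling_cost dP fg hi <= coupling_cost dP fg1 hi1 + coupling_cost dP fg2 hi2.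
Proof.
move=> hM hO; exists _, Q, fgQ, hiQ, GQ; split; last exact: costQ.
split; [exact: pmod_iso_trans isoM hM | exact: pmod_iso_trans isoO hO].
Qed.

End Tri.

Local Open Scope ereal_scope.
Lemma inf_add_le (R : realType) (S1 S2 S3 : set (\bar R)) :
  (forall c, S1 c -> 0 <= c) -> (forall c, S2 c -> 0 <= c) ->
  (forall c1 c2, S1 c1 -> S2 c2 -> exists2 c3, S3 c3 & c3 <= c1 + c2) ->
  ereal_inf S3 <= ereal_inf S1 + ereal_inf S2.
Proof.
move=> h1 h2 h3.
have g1 : 0 <= ereal_inf S1 by apply: le_ereal_inf_tmp.
have g2 : 0 <= ereal_inf S2 by apply: le_ereal_inf_tmp.
case E1: (ereal_inf S1) g1 => [r1| |] // g1; last first.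
  by rewrite addye ?leey // gt_eqF // (lt_le_trans _ g2) // ltNy0.
case E2: (ereal_inf S2) g2 => [r2| |] // g2; last first.
  by rewrite addey ?leey.
apply/lee_addgt0Pr => e e0.
have e20 : (0 < e / 2)%R by rewrite divr_gt0.
have [c1 Sc1 lt1] : exists2 c1, S1 c1 & c1 < (r1 + e / 2)%:E.
  by apply: ereal_inf_lt; rewrite E1 lte_fin ltrDl.
have [c2 Sc2 lt2] : exists2 c2, S2 c2 & c2 < (r2 + e / 2)%:E.
  by apply: ereal_inf_lt; rewrite E2 lte_fin ltrDl.
have [c3 Sc3 le3] := h3 _ _ Sc1 Sc2.
apply: le_trans (ereal_inf_lbound Sc3) _.
apply: (le_trans le3); apply: le_trans (leeD (ltW lt1) (ltW lt2)) _.
rewrite -!EFinD lee_fin le_eqVlt; apply/orP; left; apply/eqP; field.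
by [].

Qed.

Definition idGI (d : Order.disp_t) (P : finPOrderType d) : galois_ins P P :=
  @GIns d P d P id id (fun _ _ h => h) (fun _ _ h => h) (fun _ _ => erefl) (fun _ => erefl).

Local Close Scope ereal_scope.
Local Close Scope ring_scope.
Unset Implicit Arguments.
Set Strict Implicit.

Theorem proposition3p6 (k : fieldType) (R : realType) (d : Order.disp_t)
    (P : finPOrderType d) (dP : P -> P -> R) (hdP : is_metric dP) :
  forall M N O : pmod k P,
    [/\ dGT dP M M = 0%E,
        dGT dP M N = dGT dP N M &
        (dGT dP M O <= dGT dP M N + dGT dP N O)%E].
Proof.
Local Open Scope ring_scope.
Local Open Scope ereal_scope.
move=> M N O; case: hdP => hd0 hsym htri.
have cge0 : forall (A B : pmod k P) (c : \bar R), (exists (dq : Order.disp_t) (Q : finPOrderType dq)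
      (fg hi : galois_ins Q P) (G : pmod k Q),
      galois_coupling A B fg hi G /\ c = ((coupling_cost dP fg hi)%:E)%E) -> 0 <= c.
  by move=> A B _ [dq [Q [fg [hi [G [_ ->]]]]]]; rewrite lee_fin; exact: cost_ge0.
split.
- apply: le_anti; rewrite (le_ereal_inf_tmp (cge0 M M)) andbT.
  apply: ereal_inf_lbound; exists d, P, (idGI P), (idGI P), M; split.
    have I : pmod_iso (pullback (gi_g_mono (idGI P)) M) M.
      exists (fun x => 1%:M), (fun x => 1%:M); split => // *; by rewrite ?mulmx1 ?mul1mx.
    by split.
  have -> : coupling_cost dP (idGI P) (idGI P) = 0%R; last by [].
  rewrite /coupling_cost; elim/big_rec: _ => [//|i x _ ->].
  by rewrite (proj2 (hd0 i i) erefl) maxxx.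
-
  have sy (A B : pmod k P) : (dGT dP A B <= dGT dP B A)%E.
    apply: le_ereal_inf_tmp => _ [dq [Q [fg [hi [G [[c1 c2] ->]]]]]].
    apply: ereal_inf_lbound; exists dq, Q, hi, fg, G; split; first by split.
    by congr EFin; apply: eq_bigr => q _; exact: hsym.
  apply/eqP; rewrite eq_le; apply/andP; split; [move: (sy M N)|move: (sy N M)]; exact: id.
- rewrite /dGT; apply: inf_add_le; [exact: cge0|exact: cge0|].
  move=> _ _ [dq1 [Q1 [fg1 [hi1 [G1 [[cM cN] ->]]]]]] [dq2 [Q2 [fg2 [hi2 [G2 [[cN' cO] ->]]]]]].
  case: cN => [phi1 [psi1 [e1 e1' n1]]]; case: cN' => [phi2 [psi2 [e2 e2' n2]]].
  have [dq [Q [fg [hi [G [C le]]]]]] := tri_exists e1 e1' n1 e2 e2' n2 htri cM cO.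
  exists (coupling_cost dP fg hi)%:E; first by exists dq, Q, fg, hi, G.
  by rewrite -EFinD lee_fin.
Qed.
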